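(* Assume that $\boldsymbol{\chi}$ has Property NIO. Then there exists an $\ell$-adic character $\chi_0$, possibly over a finite extension $\mathbf{F}_{q^{\nu}}$ of $\mathbf{F}_q$, such that the tuple $\chi_0\boldsymbol{\chi}=(\chi_0\chi_1,\ldots,\chi_0\chi_k)$ has Property CGM over $\mathbf{F}_{q^{\nu}}$.
   Context: Let $\boldsymbol{\chi}=(\chi_1,\ldots,\chi_k)$, $k\geq2$, be a tuple of $\ell$-adic characters of $\mathbf{F}_q^\times$ (characters of a finite field $\mathbf{F}_{q^\nu}$ are composed with the norm when viewed over extensions), and $\Lambda=\chi_1\cdots\chi_k$. The tuple is Kummer-induced if there is a divisor $d\neq1$ of $k$ and characters $\xi_1,\ldots,\xi_{k/d}$ such that the $\chi_i$ are exactly (with multiplicity) all characters $\chi$ with $\chi^d=\xi_j$ for some $j$. It is self-dual if there is a character $\xi$ (dualizing character) such that the multiset of the $\chi_i$ is stable under $\chi\mapsto\xi\chi^{-1}$; a self-dual tuple is alternating if $k$ is even and $\Lambda=\xi^{k/2}$, symmetric otherwise. Property NIO: not Kummer-induced and, if $k$ is even, not self-dual symmetric. Property CGM: not Kummer-induced, $\chi_1\cdots\chi_k=1$, and either $k$ is odd, or the tuple is not self-dual, or $k$ is even, the tuple is self-dual alternating and the dualizing character $\xi$ is trivial. *)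

(* Defs.v *)
From HB Require Import structures.
From mathcomp Require Import all_boot all_order all_algebra all_fingroup all_field.
Set Implicit Arguments. Unset Strict Implicit. Unset Printing Implicit Defensive.
Import GRing.Theory Num.Theory.
Local Open Scope ring_scope.

(* Characters of the multiplicative group F^x of a finite field F, with values
   in algC (algebraic closure of Q). *)
Definition chr (F : finFieldType) := {ffun {unit F} -> algC}.

Definition is_char (F : finFieldType) (f : chr F) : Prop :=
  f 1%g = 1 /\ forall x y : {unit F}, f (x * y)%g = f x * f y.

Definition cmul (F : finFieldType) (a b : chr F) : chr F := [ffun u => a u * b u].
Definition cinv (F : finFieldType) (a : chr F) : chr F := [ffun u => (a u)^-1].
Definition cexp (F : finFieldType) (a : chr F) (n : nat) : chr F := [ffun u => a u ^+ n].
Definition ctriv (F : finFieldType) : chr F := [ffun => 1].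
Definition cprod (F : finFieldType) (s : seq (chr F)) : chr F := foldr (@cmul F) (ctriv F) s.

Definition kummer_induced (F : finFieldType) (s : seq (chr F)) : Prop :=
  exists (d : nat) (xis : seq (chr F)),
    [/\ (d %| size s)%N, d != 1%N, size xis = (size s %/ d)%N,
        (forall xi, xi \in xis -> is_char xi) &
        forall chi : chr F, is_char chi ->
          count_mem chi s = count (fun xi => cexp chi d == xi) xis].

Definition selfdual_wrt (F : finFieldType) (xi : chr F) (s : seq (chr F)) : Prop :=
  is_char xi /\ perm_eq s (map (fun chi => cmul xi (cinv chi)) s).

Definition alternating_wrt (F : finFieldType) (xi : chr F) (s : seq (chr F)) : Prop :=
  selfdual_wrt xi s /\ ~~ odd (size s) /\ cprod s = cexp xi (size s %/ 2).

Definition symmetric_wrt (F : finFieldType) (xi : chr F) (s : seq (chr F)) : Prop :=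
  selfdual_wrt xi s /\ ~ (~~ odd (size s) /\ cprod s = cexp xi (size s %/ 2)).

Definition NIO (F : finFieldType) (s : seq (chr F)) : Prop :=
  ~ kummer_induced s /\ (~~ odd (size s) -> ~ exists xi, symmetric_wrt xi s).

Definition CGM (F : finFieldType) (s : seq (chr F)) : Prop :=
  [/\ ~ kummer_induced s, cprod s = ctriv F &
      [\/ odd (size s), ~ (exists xi, selfdual_wrt xi s)
        | alternating_wrt (ctriv F) s]].

(* Norm map N_{L/F} : L^x -> F^x, u |-> u^((|L|-1)/(|F|-1)), read back in F
   through the embedding iota; a character chi of F^x is viewed over L as
   chi o N_{L/F}. *)
Definition lift_norm (F L : finFieldType) (iota : {rmorphism F -> L}) (chi : chr F) : chr L :=
  [ffun u : {unit L} =>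
     chi (odflt 1%g [pick y : {unit F} |
            iota (val y) == val u ^+ ((#|L| - 1) %/ (#|F| - 1))%N])].

(* Main.v *)
Require Import Defs.
From HB Require Import structures.
From mathcomp Require Import all_boot all_order all_algebra all_fingroup all_solvable all_field.
Set Implicit Arguments. Unset Strict Implicit. Unset Printing Implicit Defensive.
Import GRing.Theory Num.Theory.
Local Open Scope ring_scope.

Section Chars.
Variable K : finFieldType.
Implicit Types (a b c : chr K) (u v : {unit K}).

Lemma charX a u j : is_char a -> a (u ^+ j)%g = a u ^+ j.
Proof.
move=> [a1 aM]; elim: j => [|j IH]; first by rewrite expg0 a1 expr0.
by rewrite expgS aM IH exprS.
Qed.

Lemma char_nz a u : is_char a -> a u != 0.
Proof.
move=> [a1 aM]; apply/eqP => a0.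
have := aM u (u^-1)%g; rewrite mulgV a1 a0 mul0r => /eqP; by rewrite oner_eq0.
Qed.

Lemma char_N a u : is_char a -> a u ^+ #|K|.-1 = 1.
Proof.
move=> ha; rewrite -charX //.
have := @expg_cardG _ [set: {unit K}] u (in_setT _).
by rewrite card_finField_unit => ->; case: ha.
Qed.

Lemma cmul_char a b : is_char a -> is_char b -> is_char (cmul a b).
Proof.
move=> [a1 aM] [b1 bM]; split; rewrite /cmul ?ffunE ?a1 ?b1 ?mulr1 // => x y.
by rewrite !ffunE aM bM mulrACA.
Qed.

Lemma cinv_char a : is_char a -> is_char (cinv a).
Proof.
move=> [a1 aM]; split; rewrite /cinv ?ffunE ?a1 ?invr1 // => x y.
by rewrite !ffunE aM invfM.
Qed.

Lemma cexp_char a m : is_char a -> is_char (cexp a m).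
Proof.
move=> [a1 aM]; split; rewrite /cexp ?ffunE ?a1 ?expr1n // => x y.
by rewrite !ffunE aM exprMn.
Qed.

Lemma ctriv_char : is_char (ctriv K).
Proof. by split; rewrite /ctriv => *; rewrite !ffunE ?mulr1. Qed.

Lemma cprodE (s : seq (chr K)) u : Defs.cprod s u = \prod_(c <- s) c u.
Proof.
elim: s => [|c s IH]; first by rewrite big_nil /cprod /= ffunE.
by rewrite big_cons /cprod /= ffunE -IH.
Qed.

Lemma cprod_char (s : seq (chr K)) : (forall c, c \in s -> is_char c) -> is_char (Defs.cprod s).
Proof.
elim: s => [|c s IH] hs; first exact: ctriv_char.
rewrite /Defs.cprod /=; apply: cmul_char; first by apply: hs; rewrite inE eqxx.
by apply: IH => x xs; apply: hs; rewrite inE xs orbT.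
Qed.

Variable g : {unit K}.
Hypothesis hg : <[g]>%g = [set: {unit K}].

Lemma char_gen_eq a b : is_char a -> is_char b -> a g = b g -> a = b.
Proof.
move=> ha hb e; apply/ffunP => u.
have : u \in <[g]>%g by rewrite hg in_setT.
by case/cycleP => j ->; rewrite !charX // e.
Qed.

Lemma ordg : #[g]%g = #|K|.-1.
Proof. by rewrite orderE hg card_finField_unit. Qed.

Lemma mk_char (z : algC) : z ^+ #|K|.-1 = 1 -> exists c, is_char c /\ c g = z.
Proof.
move=> hz; rewrite -ordg in hz.
have H u : exists i, u == (g ^+ i)%g.
  have : u \in <[g]>%g by rewrite hg in_setT.
  by case/cycleP => i ->; exists i.
pose lg u := ex_minn (H u).
have lgP u : (g ^+ lg u)%g = u.
  by rewrite /lg; case: ex_minnP => i /eqP <-.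
have zeq i j : (g ^+ i)%g = (g ^+ j)%g -> z ^+ i = z ^+ j.
  move/eqP; rewrite eq_expg_mod_order => /eqP e.
  by rewrite -(expr_mod i hz) e expr_mod.
exists [ffun u => z ^+ lg u]; split; first split.
- by rewrite ffunE (zeq _ 0%N) // lgP expg0.
- by move=> x y; rewrite !ffunE -exprD; apply: zeq; rewrite expgD !lgP.
- by rewrite ffunE (zeq _ 1%N) ?expr1 // lgP expg1.
Qed.

Lemma roots_le (d : nat) (x : chr K) (U : seq (chr K)) :
  (0 < d)%N -> uniq U -> (forall c, c \in U -> is_char c) ->
  (count (fun c => cexp c d == x) U <= d)%N.
Proof.
move=> d0 uU hU; rewrite -size_filter.
set V := filter _ U.
have hV c : c \in V -> is_char c /\ cexp c d = x.
  by rewrite mem_filter => /andP[/eqP e cU]; split => //; apply: hU.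
have uV : uniq V by rewrite filter_uniq.
have := @max_poly_roots _ ('X^d - (x g)%:P) (map (fun c => c g) V).
rewrite size_XnsubC // size_map ltnS; apply.
- by rewrite -size_poly_eq0 size_XnsubC.
- apply/allP => _ /mapP[c cV ->]; have [_ <-] := hV c cV.
  by rewrite rootE !hornerE ffunE subrr.
- rewrite map_inj_in_uniq // => c1 c2 h1 h2; apply: char_gen_eq.
  + by case: (hV _ h1).
  + by case: (hV _ h2).
Qed.

End Chars.
Lemma gen_exists (K : finFieldType) :
  exists g : {unit K}, <[g]>%g = [set: {unit K}].
Proof.
have /cyclicP[g hg] := field_unit_group_cyclic [set: {unit K}]%G.
by exists g.
Qed.

Lemma order_gen (K : finFieldType) (g : {unit K}) :
  <[g]>%g = [set: {unit K}] -> #[g]%g = #|K|.-1.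
Proof. by move=> hg; rewrite orderE hg card_finField_unit. Qed.

Lemma unitN (K : finFieldType) (u : {unit K}) : (val u ^+ #|K|.-1 = 1).
Proof.
have := @expg_cardG _ [set: {unit K}] u (in_setT _).
by move/(congr1 val); rewrite FinRing.val_unitX /= card_finField_unit.
Qed.

Section Norm.
Variables (F L : finFieldType) (iota : {rmorphism F -> L}).
Hypothesis hnN : (#|F|.-1 %| #|L|.-1)%N.

Definition ee := ((#|L| - 1) %/ (#|F| - 1))%N.
Definition nF (u : {unit L}) : {unit F} :=
  odflt 1%g [pick y : {unit F} | iota (val y) == val u ^+ ee].

Lemma ee_mul : (ee * #|F|.-1)%N = #|L|.-1.
Proof. by rewrite /ee !subn1 divnK. Qed.

Lemma nF_spec u : iota (val (nF u)) = val u ^+ ee.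
Proof.
rewrite /nF; case: pickP => [y /eqP //| none]; exfalso.
set x := val u ^+ ee.
have xq : x ^+ #|F| = x.
  have F1 : (0 < #|F|)%N by apply/card_gt0P; exists 0.
  rewrite -(prednK F1) exprS -exprM ee_mul unitN mulr1 //.
have : root (map_poly iota ('X^#|F| - 'X)) x.
  by rewrite rmorphB /= map_polyXn map_polyX rootE !hornerE xq subrr.
rewrite finField_genPoly rmorph_prod /= rootE horner_prod.
move/prodf_eq0 => [a _]; rewrite rmorphB /= map_polyX map_polyC /= !hornerE subr_eq0.
move/eqP=> xa.
have au : a \is a GRing.unit.
  rewrite unitfE; apply: contraTneq (valP u) => a0.
  move: xa; rewrite a0 rmorph0 /x => /eqP; rewrite expf_eq0 => /andP[_ /eqP ->].
  by rewrite unitr0.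
have := none (FinRing.unit F au); rewrite /= -xa eqxx //.
Qed.

Lemma iota_val_inj : injective (fun y : {unit F} => iota (val y)).
Proof. by move=> y z /fmorph_inj /val_inj. Qed.

Lemma nFM u v : nF (u * v)%g = (nF u * nF v)%g.
Proof.
apply: iota_val_inj; rewrite /= nF_spec FinRing.val_unitM rmorphM /= !nF_spec.
by rewrite exprMn.
Qed.

Lemma nF1 : nF 1%g = 1%g.
Proof.
by apply: iota_val_inj; rewrite /= nF_spec !FinRing.val_unit1 expr1n rmorph1.
Qed.

Lemma nFX u j : nF (u ^+ j)%g = (nF u ^+ j)%g.
Proof. by elim: j => [|j IH]; rewrite ?expg0 ?nF1 // !expgS nFM IH. Qed.

Lemma nF_surj y : exists u, nF u = y.
Proof.
have [g hg] := gen_exists L.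
set h := nF g.
have ee0 : (0 < ee)%N.
  rewrite lt0n; apply/eqP => e0; have := ee_mul; rewrite e0 mul0n.
  have L1 : (1 < #|L|)%N := finNzRing_gt1 L.
  by move/eqP; rewrite eq_sym -subn1 subn_eq0 leqNgt L1.
have hk k : ((h ^+ k)%g == 1%g) = (#|F|.-1 %| k)%N.
  rewrite -(dvdn_pmul2l ee0) ee_mul -(order_gen hg) order_dvdn.
  apply/eqP/eqP => H.
    apply: val_inj; rewrite FinRing.val_unitX FinRing.val_unit1 exprM.
    by rewrite -nF_spec -rmorphXn -FinRing.val_unitX H FinRing.val_unit1 rmorph1.
  apply: iota_val_inj; rewrite /= /h FinRing.val_unitX rmorphXn nF_spec -exprM.
  by rewrite -FinRing.val_unitX H !FinRing.val_unit1 rmorph1.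
have oh : #[h]%g = #|F|.-1.
  apply/eqP; rewrite eqn_dvd order_dvdn hk dvdnn /= -hk expg_order //.
have : y \in <[h]>%g.
  have -> : <[h]>%g = [set: {unit F}] by apply/eqP; rewrite eqEcard subsetT -orderE oh card_finField_unit leqnn.
  by rewrite in_setT.
by case/cycleP => j ->; exists (g ^+ j)%g; rewrite nFX.
Qed.

End Norm.
Lemma ext_exists (F : finFieldType) (M : nat) : (M%:R : F) != 0 ->
  exists (L : finFieldType) (iota : {rmorphism F -> L}), (M %| #|L|.-1)%N.
Proof.
move=> hM.
have M0 : (0 < M)%N by case: M hM => //; rewrite eqxx.
have nzp : ('X^M - 1 : {poly F}) != 0.
  by rewrite -size_poly_eq0 size_XnsubC.
have [L0 [rs Hp _]] := FinSplittingFieldFor nzp.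
have eP : map_poly (in_alg L0) ('X^M - 1) = 'X^M - 1.
  by rewrite rmorphB /= map_polyXn rmorph1.
rewrite eP in Hp.
have hML : (M%:R : L0) != 0 by rewrite -(rmorph_nat (in_alg L0)) fmorph_eq0.
have urs : uniq rs.
  by rewrite -separable_prod_XsubC -(eqp_separable Hp) separable_Xn_sub_1.
have srs : size rs = M.
  by have := eqp_size Hp; rewrite size_prod_XsubC size_XnsubC // => -[].
have ars : all M.-unity_root rs.
  apply/allP => z zin; have : root ('X^M - 1) z by rewrite (eqp_root Hp) root_prod_XsubC.
  done.
have [z zin pz] := hasP (has_prim_root M0 ars urs (eq_leq (esym srs))).
pose L := FinFieldExtType L0.
pose iota : {rmorphism F -> L} := in_alg L0.
exists L, iota.
have zu : (z : L) \is a GRing.unit.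
  rewrite unitfE; apply/eqP => z0; have := prim_expr_order pz.
  by rewrite z0 expr0n eqn0Ngt M0 /= => /eqP; rewrite eq_sym oner_eq0.
pose u := FinRing.unit L zu.
have := @expg_cardG _ [set: {unit L}] u (in_setT _).
move/(congr1 val); rewrite FinRing.val_unitX /= card_finField_unit => hz.
by rewrite (prim_order_dvd pz) hz.
Qed.

Lemma cardR0 (F : finFieldType) : (#|F|%:R : F) = 0.
Proof.
have := @expg_cardG _ [set: F] (GRing.one F) (in_setT _).
rewrite cardsT FinRing.zmodXgE. move=> h. exact h.
Qed.

Lemma root_alg (m n N A B : nat) (w : algC) :
  (0 < B)%N -> (0 < N)%N -> (A * B)%N = m -> (B * n %| N)%N -> coprime A N ->
  w ^+ n = 1 -> exists z : algC, z ^+ N = 1 /\ z ^+ m = w.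
Proof.
move=> B0 N0 eAB /dvdnP[c eN] cAN wn.
set z0 := B.-root w.
have z0B : z0 ^+ B = w by rewrite /z0 rootCK.
have z0N : z0 ^+ N = 1 by rewrite eN mulnC exprM exprM z0B wn expr1n.
have wN : w ^+ N = 1 by rewrite eN mulnA mulnC exprM wn expr1n.
pose r := (A ^ (totient N).-1)%N.
exists (z0 ^+ r); split; first by rewrite -exprM mulnC exprM z0N expr1n.
rewrite -exprM -eAB mulnA mulnC exprM z0B mulnC.
have -> : (A * r)%N = (A ^ totient N)%N.
  by rewrite /r -expnS prednK // totient_gt0.
by rewrite -(expr_mod _ wN) Euler_exp_totient // expr_mod ?expr1.
Qed.

Section Lift.
Variables (F L : finFieldType) (iota : {rmorphism F -> L}).
Hypothesis hnN : (#|F|.-1 %| #|L|.-1)%N.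

Lemma liftE (chi : chr F) u : lift_norm iota chi u = chi (nF iota u).
Proof. by rewrite ffunE. Qed.

Lemma lift_char chi : is_char chi -> is_char (lift_norm iota chi).
Proof.
move=> [c1 cM]; split; rewrite ?liftE ?nF1 // => x y.
by rewrite !liftE nFM.
Qed.

Lemma lift_inj : injective (lift_norm iota).
Proof.
move=> a b e; apply/ffunP => y; have [u <-] := nF_surj iota hnN y.
by rewrite -!liftE e.
Qed.

Lemma cmul_lift_inj (c0 : chr L) : (forall u, c0 u != 0) ->
  injective (fun chi => cmul c0 (lift_norm iota chi)).
Proof.
move=> h a b e; apply: lift_inj; apply/ffunP => u.
have := congr1 (fun f : chr L => f u) e; rewrite /cmul /= !ffunE.
by move/(mulfI (h u)).
Qed.

End Lift.

Lemma twist_exists (F : finFieldType) (phi : chr F) (m : nat) :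
  is_char phi -> (0 < m)%N ->
  exists (L : finFieldType) (iota : {rmorphism F -> L}) (chi0 : chr L),
    [/\ (#|F|.-1 %| #|L|.-1)%N, is_char chi0 &
        cmul (cexp chi0 m) (lift_norm iota phi) = ctriv L].
Proof.
move=> hphi m0.
have [p pr pch] := finPcharP F.
set A := (m`_p)%N; set B := (m`_p^')%N; set n := #|F|.-1.
have F0 : (0 < #|F|)%N by apply/card_gt0P; exists 0.
have hB : (B%:R : F) != 0.
  by rewrite -(dvdn_pcharf pch) -p'natE // part_pnat.
have hn : (n%:R : F) != 0.
  have := cardR0 F; rewrite -(prednK F0) -/n -addn1 natrD => /eqP.
  by rewrite addr_eq0 => /eqP ->; rewrite oppr_eq0 oner_eq0.
have hBn : ((B * n)%N%:R : F) != 0 by rewrite natrM mulf_neq0.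
have [L [iota hM]] := ext_exists hBn.
have hnN : (n %| #|L|.-1)%N by apply: dvdn_trans hM; apply: dvdn_mull.
have L0 : (0 < #|L|)%N by apply/card_gt0P; exists 0.
have L1 : (1 < #|L|)%N := finNzRing_gt1 L.
have pL : p \in [pchar L].
  by rewrite inE pr /= -(rmorph_nat iota) ((pcharf0 pch)) rmorph0.
have cAN : coprime A #|L|.-1.
  apply: (pnat_coprime (part_pnat _ _)); rewrite p'natE //.
  apply/negP => pN; have := dvdn_pcharf pL #|L|.
  rewrite cardR0 eqxx -(prednK L0) -addn1 (dvdn_addr _ pN) dvdn1 => /eqP p1.
  by move: pr; rewrite p1.
have N0 : (0 < #|L|.-1)%N by rewrite -ltnS prednK.
have [g hg] := gen_exists L.
set w := (lift_norm iota phi g)^-1.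
have wn : w ^+ n = 1 by rewrite /w exprVn liftE char_N // invr1.
have [z [zN zm]] := @root_alg m n #|L|.-1 A B w (part_gt0 _ _) N0 (partnC p m0) hM cAN wn.
have [c0 [hc0 c0g]] := mk_char hg zN.
exists L, iota, c0; split => //.
apply: (char_gen_eq hg).
- by apply: cmul_char; [apply: cexp_char | apply: lift_char].
- exact: ctriv_char.
rewrite !ffunE c0g zm /w -[odflt _ _]/(nF iota g) -liftE mulVf //.
by apply: char_nz; apply: lift_char.
Qed.
From mathcomp Require Import zify ring.
From Stdlib Require Import Classical_Prop.

Lemma size_undup_sum (T : eqType) (t : seq T) :
  size t = (\sum_(c <- undup t) count_mem c t)%N.
Proof.
rewrite -sum1_size -(big_undup_iterop_count _ t predT (fun _ => 1%N)).
by apply: eq_bigr => c _; rewrite Monoid.iteropE iter_addn_0 mul1n.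
Qed.

Lemma sum_le (T : eqType) (xs : seq T) (r : T -> nat) d :
  (forall x, x \in xs -> r x <= d)%N -> (\sum_(x <- xs) r x <= d * size xs)%N.
Proof.
elim: xs => [|y ys IH] h; first by rewrite big_nil.
rewrite big_cons /= mulnS leq_add ?h ?mem_head // IH // => x xs.
by apply: h; rewrite inE xs orbT.
Qed.

Lemma sum_eq_max (T : eqType) (xs : seq T) (r : T -> nat) d :
  (forall x, x \in xs -> r x <= d)%N -> (\sum_(x <- xs) r x = d * size xs)%N ->
  forall x, x \in xs -> r x = d.
Proof.
elim: xs => [|y ys IH] h hs x //.
have h' : forall x, x \in ys -> (r x <= d)%N by move=> z zs; apply: h; rewrite inE zs orbT.
have := sum_le h'; have := h y (mem_head _ _).
move: hs; rewrite big_cons /= mulnS => hs hy hys.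
have ry : r y = d by lia.
have hs' : (\sum_(x <- ys) r x = d * size ys)%N by lia.
by rewrite inE => /orP[/eqP -> // | xs]; apply: IH.
Qed.

Lemma kummer_transfer (F L : finFieldType) (iota : {rmorphism F -> L})
  (c0 : chr L) (s : seq (chr F)) :
  (#|F|.-1 %| #|L|.-1)%N -> is_char c0 -> (0 < size s)%N ->
  (forall chi, chi \in s -> is_char chi) -> ~ kummer_induced s ->
  ~ kummer_induced (map (fun chi => cmul c0 (lift_norm iota chi)) s).
Proof.
move=> hnN hc0 s0 hs nK [d [xis [hd hd1 hsz hxc hcnt]]].
set f := fun chi => cmul c0 (lift_norm iota chi).
set t := map f s.
have finj : injective f := cmul_lift_inj hnN (fun u => char_nz u hc0).
have fchar chi : is_char chi -> is_char (f chi).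
  by move=> h; apply: cmul_char => //; apply: lift_char.
have ht c : c \in t -> is_char c.
  by case/mapP => chi chis ->; apply: fchar; apply: hs.
have d0 : (0 < d)%N.
  rewrite lt0n; apply: contraTneq hd => ->; rewrite dvd0n size_map -lt0n //.
have [g hg] := gen_exists L.
set U := undup t.
set r := fun x => count (fun c => cexp c d == x) U.
have hsum : (\sum_(x <- xis) r x = d * size xis)%N.
  rewrite hsz mulnC divnK // (size_undup_sum t) -/U.
  rewrite (eq_big_seq (fun c => count (fun x => cexp c d == x) xis)); last first.
    by move=> c; rewrite mem_undup => ct; apply: hcnt; apply: ht.
  rewrite /r; under [RHS]eq_bigr do rewrite -sum1_count big_mkcond /=.
  under [LHS]eq_bigr do rewrite -sum1_count big_mkcond /=.
  exact: exchange_big.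
have hle x : x \in xis -> (r x <= d)%N.
  move=> _; apply: (roots_le hg) => //; first exact: undup_uniq.
  by move=> c; rewrite mem_undup; apply: ht.
have hroot x : x \in xis -> has (fun psi => cexp (f psi) d == x) s.
  move=> xin; have := sum_eq_max hle hsum xin; rewrite /r => e.
  have : (0 < count (fun c => cexp c d == x) U)%N by rewrite e.
  rewrite -has_count => /hasP[c]; rewrite mem_undup => /mapP[psi psis ->] e2.
  by apply/hasP; exists psi.
pose sel x := nth (ctriv F) s (find (fun psi => cexp (f psi) d == x) s).
have sel_in x : x \in xis -> sel x \in s.
  by move=> xin; rewrite /sel mem_nth // -has_find hroot.
have sel_eq x : x \in xis -> cexp (f (sel x)) d = x.
  by move=> xin; apply/eqP; apply: (nth_find _ (hroot x xin)).
have cexpf a : cexp (f a) d = cmul (cexp c0 d) (lift_norm iota (cexp a d)).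
  by apply/ffunP => u; rewrite !ffunE exprMn.
have finj2 : injective (fun a => cmul (cexp c0 d) (lift_norm iota a)).
  by apply: (cmul_lift_inj hnN) => u; apply: char_nz; apply: cexp_char.
apply: nK; exists d, (map (fun x => cexp (sel x) d) xis); split.
- by rewrite size_map in hd.
- exact: hd1.
- by rewrite size_map hsz size_map.
- by move=> _ /mapP[x xin ->]; apply: cexp_char; apply: hs; apply: sel_in.
move=> phi hphi.
have -> : count_mem phi s = count_mem (f phi) t.
  by rewrite count_map; apply: eq_count => psi /=; rewrite (inj_eq finj).
rewrite hcnt; last exact: fchar.
rewrite count_map; apply: eq_in_count => x xin /=.
by rewrite -{1}(sel_eq x xin) !cexpf (inj_eq finj2).
Qed.

Lemma cmulE (K : finFieldType) (a b : chr K) u : cmul a b u = a u * b u.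
Proof. by rewrite ffunE. Qed.
Lemma cinvE (K : finFieldType) (a : chr K) u : cinv a u = (a u)^-1.
Proof. by rewrite ffunE. Qed.
Lemma cexpE (K : finFieldType) (a : chr K) m u : cexp a m u = a u ^+ m.
Proof. by rewrite ffunE. Qed.
Lemma ctrivE (K : finFieldType) u : ctriv K u = 1.
Proof. by rewrite ffunE. Qed.

Lemma cprod_twist (F L : finFieldType) (iota : {rmorphism F -> L}) (c0 : chr L)
  (s : seq (chr F)) u :
  Defs.cprod (map (fun chi => cmul c0 (lift_norm iota chi)) s) u =
  c0 u ^+ size s * Defs.cprod s (nF iota u).
Proof.
elim: s => [|chi s IH]; first by rewrite /= !ctrivE mulr1.
by rewrite /Defs.cprod /= !cmulE -/(Defs.cprod _) IH liftE exprS; ring.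
Qed.

Theorem lemma6p3 (F : finFieldType) (s : seq (chr F)) :
  (2 <= size s)%N ->
  (forall chi, chi \in s -> is_char chi) ->
  NIO s ->
  exists (L : finFieldType) (iota : {rmorphism F -> L}) (chi0 : chr L),
    is_char chi0 /\ CGM (map (fun chi => cmul chi0 (lift_norm iota chi)) s).
Proof.
move=> k2 hs [nK hsym].
have s0 : (0 < size s)%N by apply: leq_trans k2.
have [P|nP] := classic (~~ odd (size s) /\ exists xi, selfdual_wrt xi s).
  case: P => ev [xi [hxi hperm]].
  have hL : Defs.cprod s = cexp xi (size s %/ 2).
    case: (classic (Defs.cprod s = cexp xi (size s %/ 2))) => // nh; exfalso.
    by apply: (hsym ev); exists xi; split => // -[_ h].
  have [L [iota [c0 [hnN hc0 hroot]]]] := twist_exists hxi (isT : (0 < 2)%N).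
  exists L, iota, c0; split => //.
  have hr u : c0 u ^+ 2 * xi (nF iota u) = 1.
    by have := congr1 (fun h : chr L => h u) hroot; rewrite cmulE cexpE liftE ctrivE.
  have ek : size s = (2 * (size s %/ 2))%N.
    by rewrite mulnC divnK // dvdn2.
  have hprod : Defs.cprod (map (fun chi => cmul c0 (lift_norm iota chi)) s) = ctriv L.
    apply/ffunP => u; rewrite cprod_twist hL cexpE ctrivE {1}ek exprM -exprMn hr.
    by rewrite expr1n.
  split.
  - apply: kummer_transfer => //.
  - exact: hprod.
  apply: Or33; split; last first.
    split; first by rewrite size_map.
    rewrite hprod; apply/ffunP => u; rewrite cexpE !ctrivE expr1n //.
  split; first exact: ctriv_char.
  have E : forall chi, cmul (ctriv L) (cinv (cmul c0 (lift_norm iota chi))) =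
      cmul c0 (lift_norm iota (cmul xi (cinv chi))).
    move=> chi; apply/ffunP => u.
    rewrite !(cmulE, cinvE, liftE, ctrivE).
    have c0n : c0 u != 0 by apply: char_nz.
    have e : (c0 u)^-1 = c0 u * xi (nF iota u).
      by apply: (mulfI c0n); rewrite mulfV // mulrA -expr2 hr.
    by rewrite mul1r invfM e; ring.
  apply: perm_trans (perm_map (fun chi => cmul c0 (lift_norm iota chi)) hperm) _.
  rewrite -!map_comp (eq_map E); exact: perm_refl.
have [L [iota [c0 [hnN hc0 hroot]]]] := twist_exists (cprod_char hs) s0.
exists L, iota, c0; split => //.
set f := fun chi => cmul c0 (lift_norm iota chi).
have hprod : Defs.cprod (map f s) = ctriv L.
  apply/ffunP => u; rewrite cprod_twist ctrivE.
  by have := congr1 (fun h : chr L => h u) hroot; rewrite cmulE cexpE liftE ctrivE.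
split.
- by apply: kummer_transfer.
- exact: hprod.
case: (boolP (odd (size s))) => ev; first by apply: Or31; rewrite size_map.
apply: Or32 => -[xi' [hxi' hp]]; apply: nP; split => //.
have finj : injective f := cmul_lift_inj hnN (fun u => char_nz u hc0).
case: s k2 hs nK hsym s0 hroot hprod hp ev => [//|chi1 s'] k2 hs nK hsym s0 hroot hprod hp ev.
set s := chi1 :: s' in hs nK hsym s0 hroot hprod hp ev *.
have : cmul xi' (cinv (f chi1)) \in map f s.
  rewrite (perm_mem hp); apply: (map_f (fun chi => cmul xi' (cinv chi))).
  by apply: map_f; rewrite mem_head.
case/mapP => chij chijs e.
have hc1 : is_char chi1 by apply: hs; rewrite mem_head.
have hcj : is_char chij by apply: hs.
exists (cmul chi1 chij); split; first exact: cmul_char.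
apply: (perm_map_inj finj); apply: perm_trans hp _.
suff E : {in s, (fun chi => cmul xi' (cinv (f chi))) =1
    (fun chi => f (cmul (cmul chi1 chij) (cinv chi)))}.
  by move/eq_in_map: E => E; rewrite -!map_comp E perm_refl.
move=> chi chis /=.
have hch : is_char chi by apply: hs.
apply/ffunP => u; rewrite /f !(cmulE, cinvE, liftE).
have := congr1 (fun h : chr L => h u) e; rewrite /f !(cmulE, cinvE, liftE) => e'.
have c0n : c0 u != 0 by apply: char_nz.
have c1n : chi1 (nF iota u) != 0 by apply: char_nz.
have chn : chi (nF iota u) != 0 by apply: char_nz.
have -> : xi' u = c0 u * chij (nF iota u) * (c0 u * chi1 (nF iota u)).
  by rewrite -e' mulfVK // mulf_neq0.
by field; rewrite c0n chn.
Qed.
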